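(* Let $\sigma=(a_1,\ldots,a_s)$ be a partition of $r$ with $a_1\ge\cdots\ge a_s$, let $H=H(n,r,q\mid\sigma)$, and let $M$ be a maximum matching in $H$. Then there is a matching $M_c$ in $H$ with $|M_c|=|M|$ (hence also maximum) such that: (1) for every edge $E\in M_c$ and every class $V_i$ with $E\cap V_i\neq\emptyset$, the vertices of $E\cap V_i$ are consecutive in $V_i$; and (2) in each class $V_i$, the vertices not covered by $M_c$ are consecutive and lie at the top or at the bottom of $V_i$.
   Context: A $\sigma$-hypergraph $H=H(n,r,q\mid\sigma)$, for a partition $\sigma$ of $r$, is the $r$-uniform hypergraph whose vertex set is the disjoint union of $n$ classes $V_1,\ldots,V_n$, each of size $q$; an $r$-subset $K$ of vertices is an edge iff the multiset of non-zero values $|K\cap V_i|$ equals $\sigma$. The vertices of each class are ordered $V_i=\{v_{1,i},v_{2,i},\ldots,v_{q,i}\}$; a set of vertices of $V_i$ is consecutive if it is of the form $\{v_{j,i},v_{j+1,i},\ldots,v_{j+m,i}\}$; the top $k$ vertices of $V_i$ are $v_{1,i},\ldots,v_{k,i}$ and the bottom $k$ vertices are $v_{q-k+1,i},\ldots,v_{q,i}$. A matching is a set of pairwise vertex-disjoint edges; a maximum matching is one of largest size. *)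

(* Defs.v *)
From mathcomp Require Import all_boot.
Set Implicit Arguments. Unset Strict Implicit. Unset Printing Implicit Defensive.

(* Vertices of H(n,r,q|sigma): pairs (i, j) meaning v_{j+1, i+1}
   (class i : 'I_n, position j : 'I_q, 0-based, position 0 = top). *)
Notation vtx n q := ('I_n * 'I_q)%type.

Section Sigma.
Variables (n q r : nat) (sigma : seq nat).

Definition cls (i : 'I_n) : {set vtx n q} := [set v : vtx n q | v.1 == i].

Definition is_partition : Prop :=
  [/\ sorted geq sigma, all (fun a => 0 < a) sigma & sumn sigma = r].

Definition is_edge (K : {set vtx n q}) : Prop :=
  #|K| = r /\
  perm_eq [seq #|K :&: cls i| | i <- enum 'I_n & 0 < #|K :&: cls i|] sigma.

Definition is_matching (M : {set {set vtx n q}}) : Prop :=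
  (forall E, E \in M -> is_edge E) /\
  (forall E F, E \in M -> F \in M -> E != F -> [disjoint E & F]).

Definition is_max_matching (M : {set {set vtx n q}}) : Prop :=
  is_matching M /\ (forall M', is_matching M' -> #|M'| <= #|M|).

Definition covered (M : {set {set vtx n q}}) : {set vtx n q} :=
  \bigcup_(E in M) E.

Definition consecutive (i : 'I_n) (S : {set vtx n q}) : Prop :=
  exists a b : 'I_q, a <= b /\ S = [set v : vtx n q | (v.1 == i) && (a <= v.2 <= b)].

Definition top_k (i : 'I_n) (k : nat) : {set vtx n q} :=
  [set v : vtx n q | (v.1 == i) && (v.2 < k)].
Definition bottom_k (i : 'I_n) (k : nat) : {set vtx n q} :=
  [set v : vtx n q | (v.1 == i) && (q - k <= v.2)].

End Sigma.

(* Main.v *)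
Require Import Defs.
From mathcomp Require Import all_boot zify.
Set Implicit Arguments. Unset Strict Implicit. Unset Printing Implicit Defensive.

Lemma card_cls_pred n q (i : 'I_n) (P : pred 'I_q) :
  #|[set v : vtx n q | (v.1 == i) && P v.2]| = #|[set j : 'I_q | P j]|.
Proof.
have -> : [set v : vtx n q | (v.1 == i) && P v.2] = (fun j => (i, j)) @: [set j | P j].
  apply/setP => [[i' j]]; rewrite !inE /=; apply/idP/imsetP.
    by case/andP => /eqP -> Pj; exists j; rewrite ?inE.
  by case=> j' Pj [-> ->]; rewrite eqxx; rewrite inE in Pj.
by rewrite card_imset // => a b [].
Qed.

Lemma card_cls n q (i : 'I_n) : #|cls q i| = q.
Proof.
have -> : cls q i = [set v : vtx n q | (v.1 == i) && predT v.2].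
  by apply/setP => v; rewrite !inE andbT.
by rewrite card_cls_pred; rewrite -[RHS]card_ord; apply: eq_card => j; rewrite inE.
Qed.

Lemma card_range q a c : a + c <= q -> #|[set j : 'I_q | a <= j < a + c]| = c.
Proof.
move=> h; rewrite -sum1_card.
transitivity (\sum_(0 <= j < q | a <= j < a + c) 1).
  by rewrite big_mkord; apply: eq_bigl => j; rewrite inE.
rewrite sum1_count /index_iota subn0.
have -> : q = a + (c + (q - (a + c))) by lia.
rewrite !iotaD !count_cat /=.
rewrite (eq_in_count (a1 := fun j => a <= j < a + c) (a2 := pred0) (s := iota 0 a)); last by move=> x; rewrite mem_iota /=; lia.
rewrite (eq_in_count (a1 := fun j => a <= j < a + c) (a2 := predT) (s := iota (0 + a) c)); last by move=> x; rewrite mem_iota /=; lia.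
rewrite (eq_in_count (a1 := fun j => a <= j < a + c) (a2 := pred0) (s := iota (0 + a + c) _)); last by move=> x; rewrite mem_iota /=; lia.
rewrite !count_pred0 count_predT size_iota; lia.
Qed.

Lemma card_classes n q (K : {set vtx n q}) : #|K| = \sum_(i : 'I_n) #|K :&: cls q i|.
Proof.
rewrite -sum1_card (partition_big (fun v : vtx n q => v.1) predT) //=.
apply: eq_bigr => i _; rewrite -sum1_card; apply: eq_bigl => v; rewrite !inE.
by rewrite eq_sym.
Qed.

Section Build.
Variables (n q : nat) (s : seq {set vtx n q}).
Hypothesis disj : forall k l, k < l < size s -> [disjoint nth set0 s k & nth set0 s l].

Definition cnt k (i : 'I_n) := #|nth set0 s k :&: cls q i|.
Definition off k i := \sum_(0 <= l < k) cnt l i.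
Definition blk k : {set vtx n q} :=
  [set v : vtx n q | off k v.1 <= v.2 < off k v.1 + cnt k v.1].

Lemma offS k i : off k.+1 i = off k i + cnt k i.
Proof. by rewrite /off big_nat_recr. Qed.

Lemma off_mono k l i : k <= l -> off k i <= off l i.
Proof.
move=> h; rewrite /off (@big_cat_nat _ _ _ k 0 l) //=; exact: leq_addr.
Qed.

Lemma off_lt k l i : k < l -> off k i + cnt k i <= off l i.
Proof. by move=> h; rewrite -offS; apply: off_mono. Qed.

Lemma total_le i : off (size s) i <= q.
Proof.
pose F := fun l : 'I_(size s) => nth set0 s l :&: cls q i.
have dF : forall a b, a != b -> [disjoint F a & F b].
  move=> a b ab; rewrite /F.
  have [lt|lt|eq] := ltngtP a b.
  - apply: (disjointW (subsetIl _ _) (subsetIl _ _)).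
    by apply: disj; rewrite lt ltn_ord.
  - apply: (disjointW (subsetIl _ _) (subsetIl _ _)); rewrite disjoint_sym.
    by apply: disj; rewrite lt ltn_ord.
  - by move: ab; rewrite (val_inj eq) eqxx.
have := partition_disjoint_bigcup addn (fun _ => 1) dF.
rewrite sum1_card => e.
have : #|\bigcup_l F l| <= #|cls q i|.
  apply: subset_leq_card; apply/bigcupsP => l _; exact: subsetIr.
rewrite card_cls e /off big_mkord => h; apply: leq_trans h.
by rewrite leq_eqVlt; apply/orP; left; apply/eqP; apply: eq_bigr => l _; rewrite sum1_card.
Qed.

Lemma blk_end k i : k < size s -> off k i + cnt k i <= q.
Proof. move=> h; apply: leq_trans (total_le i); exact: off_lt. Qed.

Lemma blk_cls k i : blk k :&: cls q i =
   [set v : vtx n q | (v.1 == i) && (off k i <= v.2 < off k i + cnt k i)].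
Proof.
apply/setP => v; rewrite !inE andbC; case: eqP => //= ->; done.
Qed.

Lemma card_blk_cls k i : k < size s -> #|blk k :&: cls q i| = cnt k i.
Proof.
move=> h; rewrite blk_cls (card_cls_pred i (fun j : 'I_q => off k i <= j < off k i + cnt k i)).
exact: card_range (blk_end i h).
Qed.

Lemma blk_disj k l : k < l -> [disjoint blk k & blk l].
Proof.
move=> h; rewrite -setI_eq0; apply/eqP/setP => v; rewrite !inE.
have := off_lt v.1 h.
move=> H; apply/negbTE/negP => /and3P[/andP[_ a] b _]; by have := leq_trans a (leq_trans H b); rewrite ltnn.
Qed.

Lemma blk_cover_lt k v : v \in blk k -> k < size s -> v.2 < off (size s) v.1.
Proof.
rewrite inE => /andP[_ h] ks; apply: leq_trans h _; exact: off_lt.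
Qed.

Lemma cover_ex K i (j : 'I_q) : K <= size s -> j < off K i ->
  exists2 k, k < K & (i, j) \in blk k.
Proof.
elim: K => [|K IH] Ks; first by rewrite /off big_geq.
rewrite offS => hj.
case: (ltnP j (off K i)) => h.
  by case: (IH (ltnW Ks) h) => k kK hk; exists k => //; exact: ltnW.
by exists K => //; rewrite inE /= h hj.
Qed.

End Build.

Theorem lemma3p1 (n r q : nat) (sigma : seq nat)
  (Hsigma : is_partition r sigma)
  (M : {set {set vtx n q}})
  (HM : is_max_matching r sigma M) :
  exists Mc : {set {set vtx n q}},
    [/\ is_matching r sigma Mc,
        #|Mc| = #|M|,
        (forall E, E \in Mc -> forall i : 'I_n,
            E :&: cls q i != set0 -> consecutive i (E :&: cls q i))
      & (forall i : 'I_n, exists k : nat,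
            cls q i :\: covered Mc = top_k q i k \/
            cls q i :\: covered Mc = bottom_k q i k)].
Proof.
case: HM => [[Hedge Hdisj] _].
set s := enum M.
have sM : forall k, k < size s -> nth set0 s k \in M.
  by move=> k ks; rewrite -mem_enum; apply: mem_nth.
have disj : forall k l, k < l < size s -> [disjoint nth set0 s k & nth set0 s l].
  move=> k l /andP[kl ls]; have ks : k < size s by apply: ltn_trans ls.
  apply: Hdisj; try exact: sM.
  by rewrite nth_uniq ?enum_uniq //; rewrite neq_ltn kl.
pose N := fun k : 'I_(size s) => blk s k.
have Nedge : forall k : 'I_(size s), is_edge r sigma (N k).
  move=> k; have [c p] := Hedge _ (sM _ (ltn_ord k)).
  have e : forall i, #|N k :&: cls q i| = #|nth set0 s k :&: cls q i|.
    by move=> i; rewrite /N card_blk_cls.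
  split; first by rewrite card_classes (eq_bigr _ (fun i _ => e i)) -card_classes.
  rewrite (eq_filter (a2 := fun i => 0 < #|nth set0 s k :&: cls q i|)); last by move=> i; rewrite e.
  by rewrite (eq_map e).
have Ndisj : forall k l : 'I_(size s), k != l -> [disjoint N k & N l].
  move=> k l kl; have [lt|lt|eq] := ltngtP k l.
  - exact: blk_disj.
  - by rewrite disjoint_sym; apply: blk_disj.
  - by move: kl; rewrite (val_inj eq) eqxx.
have Ninj : injective N.
  move=> k l e; apply/eqP; apply/negPn/negP => kl.
  have := Ndisj _ _ kl; rewrite e -setI_eq0 setIid => /eqP N0.
  have [r0 _] := Nedge l; rewrite N0 cards0 in r0.
  have : #|M| <= 1.
    have -> : 1 = #|[set set0 : {set vtx n q}]| by rewrite cards1.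
    apply: subset_leq_card; apply/subsetP => E EM; rewrite inE.
    have [cE _] := Hedge _ EM; by rewrite -cards_eq0 cE -r0.
  rewrite cardE -/s => s1.
  have := leq_trans (ltn_ord k) s1; have := leq_trans (ltn_ord l) s1.
  by move: kl; rewrite -(inj_eq val_inj) /=; case: (val k) => [|[]] //; case: (val l) => [|[]].
exists (N @: setT); split.
- split.
  + by move=> E /imsetP[k _ ->]; apply: Nedge.
  + move=> E F /imsetP[k _ ->] /imsetP[l _ ->] kl; apply: Ndisj.
    by apply: contraNneq kl => ->.
- by rewrite card_imset // cardsT card_ord cardE.
- move=> E /imsetP[k _ ->] i ne.
  have cp : 0 < cnt s k i.
    by rewrite -card_blk_cls // card_gt0.
  have e := blk_end disj i (ltn_ord k).
  have a_lt : off s k i < q by move: cp e; move: (off s k i) (cnt s k i) => x y; lia.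
  have b_lt : off s k i + cnt s k i - 1 < q by move: cp e; move: (off s k i) (cnt s k i) => x y; lia.
  exists (Ordinal a_lt), (Ordinal b_lt); split => /=; first by move: cp; move: (off s k i) (cnt s k i) => x y; lia.
  rewrite /N blk_cls; apply/setP => v; rewrite !inE.
  case: (v.1 == i) => //=.
  move: cp; move: (off s k i) (cnt s k i) (nat_of_ord v.2) => x y z h; apply/idP/idP; lia.
- move=> i; exists (q - off s (size s) i); right.
  apply/setP => v; rewrite !inE.
  case: eqP => [vi|] //=; rewrite ?andbT ?andbF //.
  have t := total_le disj i.
  rewrite subKn //.
  have cov : (v \in covered (N @: setT)) = (v.2 < off s (size s) i).
    apply/bigcupP/idP.
    - case=> E /imsetP[k _ ->] vk; have := blk_cover_lt vk (ltn_ord k).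
      by rewrite vi.
    - move=> h; have [k ks hk] := cover_ex (s:=s) (i:=i) (j:=v.2) (leqnn _) h.
      exists (N (Ordinal ks)); first by apply: imset_f; rewrite inE.
      by rewrite /N /=; case: v vi {h} hk => a b /= ->.
  by rewrite cov -leqNgt.
Qed.
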